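(* Let $v_1,\dots,v_m\in\mathbb{Q}^n$, let $P=P_{v_1,\dots,v_m}$, and let $a_1\le b_1,\dots,a_m\le b_m$ be elements of $\mathbb{Q}_P$. If $w\in\sum_{i=1}^m\mathbb{Q}_Pv_i$ can be written as $w=\sum_{i=1}^m x_iv_i$ with rational numbers $a_i\le x_i\le b_i$ ($i=1,\dots,m$), then there exist $y_1,\dots,y_m\in\mathbb{Q}_P$ with $a_i\le y_i\le b_i$ for all $i$ and $w=\sum_{i=1}^m y_iv_i$.
   Context: An elementary integral relation among $v_1,\dots,v_m$ is a relation $\sum_{i=1}^m a_iv_i=0$ with $a_i\in\mathbb{Z}$ not all zero, whose support $\{i:a_i\neq0\}$ is minimal (inclusion-wise) among supports of nontrivial linear relations, and whose coefficients have greatest common divisor $1$. $P_{v_1,\dots,v_m}$ is the (finite) set of primes $p$ for which there exists an elementary integral relation $\sum a_iv_i=0$ with $p\mid\prod_{a_i\neq0}a_i$. For a set of primes $P$, $\mathbb{Q}_P=\{a/b: a,b\in\mathbb{Z},\ b\neq0,\ \text{all prime factors of } b \text{ lie in } P\}$ (so $\mathbb{Q}_\emptyset=\mathbb{Z}$). *)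

(* Defs.v *)
From HB Require Import structures.
From mathcomp Require Import all_boot all_order all_algebra.
Set Implicit Arguments. Unset Strict Implicit. Unset Printing Implicit Defensive.
Import Order.TTheory GRing.Theory Num.Theory.
Local Open Scope ring_scope.

Definition supp {m : nat} {R : nzRingType} (c : 'I_m -> R) : {set 'I_m} :=
  [set i | c i != 0].

Definition lin_rel {m n : nat} (v : 'I_m -> 'rV[rat]_n) (c : 'I_m -> rat) : Prop :=
  (exists i, c i != 0) /\ \sum_(i < m) c i *: v i = 0.

Definition elem_int_rel {m n : nat} (v : 'I_m -> 'rV[rat]_n) (a : 'I_m -> int) : Prop :=
  [/\ lin_rel v (fun i => (a i)%:~R),
      (forall c : 'I_m -> rat, lin_rel v c -> supp c \subset supp a -> supp c = supp a)
    & \big[gcdz/0]_(i < m) a i = 1].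

Definition inP {m n : nat} (v : 'I_m -> 'rV[rat]_n) (p : nat) : Prop :=
  prime p /\ exists a : 'I_m -> int,
    elem_int_rel v a /\ (p %| \prod_(i < m | a i != 0) `|a i|)%N.

Definition inQP {m n : nat} (v : 'I_m -> 'rV[rat]_n) (q : rat) : Prop :=
  exists (a b : int), b != 0 /\ q = a%:~R / b%:~R /\
    (forall p : nat, prime p -> (p %| `|b|)%N -> inP v p).

(* Main.v *)
Require Import Defs.
From HB Require Import structures.
From mathcomp Require Import all_boot all_order all_algebra.
From mathcomp Require Import ring lra.
From Stdlib Require Import Classical ClassicalEpsilon.
Set Implicit Arguments. Unset Strict Implicit.
Import Order.TTheory GRing.Theory Num.Theory.
Local Open Scope ring_scope.
Lemma QP_int m n (v : 'I_m -> 'rV[rat]_n) (k : int) : inQP v k%:~R.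
Proof.
exists k, 1; split => //; split; first by rewrite divr1.
by move=> p pp; rewrite /= dvdn1 => /eqP p1; move: pp; rewrite p1.
Qed.

Lemma QPD m n (v : 'I_m -> 'rV[rat]_n) x y : inQP v x -> inQP v y -> inQP v (x + y).
Proof.
move=> [a1 [b1 [h1 [e1 P1]]]] [a2 [b2 [h2 [e2 P2]]]].
exists (a1 * b2 + a2 * b1), (b1 * b2); split; first by rewrite mulf_neq0.
split.
  rewrite e1 e2 !rmorphD !rmorphM /=.
  have h1' : (b1%:~R : rat) != 0 by rewrite intr_eq0.
  have h2' : (b2%:~R : rat) != 0 by rewrite intr_eq0.
  by field; rewrite h1' h2'.
move=> p pp; rewrite abszM Euclid_dvdM // => /orP [] ?; [exact: P1|exact: P2].
Qed.

Lemma QPM m n (v : 'I_m -> 'rV[rat]_n) x y : inQP v x -> inQP v y -> inQP v (x * y).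
Proof.
move=> [a1 [b1 [h1 [e1 P1]]]] [a2 [b2 [h2 [e2 P2]]]].
exists (a1 * a2), (b1 * b2); split; first by rewrite mulf_neq0.
split.
  rewrite e1 e2 !rmorphM /=.
  have h1' : (b1%:~R : rat) != 0 by rewrite intr_eq0.
  have h2' : (b2%:~R : rat) != 0 by rewrite intr_eq0.
  by field; rewrite h1' h2'.
move=> p pp; rewrite abszM Euclid_dvdM // => /orP [] ?; [exact: P1|exact: P2].
Qed.

Lemma QPN m n (v : 'I_m -> 'rV[rat]_n) x : inQP v x -> inQP v (- x).
Proof. by move=> h; rewrite -mulN1r; apply: QPM => //; have := QP_int v (-1)%R; rewrite rmorphN1. Qed.

Lemma QP0 m n (v : 'I_m -> 'rV[rat]_n) : inQP v 0.
Proof. exact: (QP_int v 0). Qed.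

Lemma QP_sum m n (v : 'I_m -> 'rV[rat]_n) (P : pred 'I_m) (F : 'I_m -> rat) :
  (forall i, P i -> inQP v (F i)) -> inQP v (\sum_(i < m | P i) F i).
Proof.
move=> h; apply: (big_ind (inQP v)); [exact: QP0| exact: QPD | exact: h].
Qed.

Lemma QP_ratio m n (v : 'I_m -> 'rV[rat]_n) (a : 'I_m -> int) i (k : int) :
  elem_int_rel v a -> a i != 0 -> inQP v (k%:~R / (a i)%:~R).
Proof.
move=> he hi; exists k, (a i); split => //; split => // p pp hp; split => //.
exists a; split => //; apply: dvdn_trans hp _.
by rewrite (bigD1 i) //=; apply: dvdn_mulr.
Qed.
Definition freeS m n (v : 'I_m -> 'rV[rat]_n) (S : {set 'I_m}) : Prop :=
  forall c : 'I_m -> rat, (forall i, i \notin S -> c i = 0) ->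
    \sum_(i < m) c i *: v i = 0 -> forall i, c i = 0.

Lemma notfree m n (v : 'I_m -> 'rV[rat]_n) S : ~ freeS v S ->
  exists c : 'I_m -> rat, [/\ forall i, i \notin S -> c i = 0,
    \sum_(i < m) c i *: v i = 0 & exists k, c k != 0].
Proof.
move=> hn; apply: NNPP => hc; apply: hn => c hs hsum i.
case: (c i =P 0) => // /eqP hi; exfalso; apply: hc; exists c; split => //.
by exists i.
Qed.

Lemma int_scale m (c : 'I_m -> rat) (k : 'I_m) : c k != 0 ->
  exists a : 'I_m -> int, exists l : rat,
    [/\ l != 0, forall j, (a j)%:~R = l * c j & \big[gcdz/0]_(j < m) a j = 1].
Proof.
move=> ck.
pose D := \prod_(k0 < m) denq (c k0).
pose a0 := fun j => numq (c j) * \prod_(k0 < m | k0 != j) denq (c k0).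
have Dn0 : (D%:~R : rat) != 0.
  by rewrite intr_eq0 prodf_seq_neq0; apply/allP => i _; rewrite denq_neq0.
have Ha0 : forall j, ((a0 j)%:~R : rat) = c j * D%:~R.
  move=> j; rewrite /a0 /D. rewrite (bigD1 j (P:=xpredT)) //= !intrM.
  rewrite -{2}(divq_num_den (c j)).
  have : ((denq (c j))%:~R : rat) != 0 by rewrite intr_eq0 denq_neq0.
  move=> hd; by field.
pose g := \big[gcdz/0]_(j < m) a0 j.
have gdiv : forall j, (g %| a0 j)%Z.
  move=> j; rewrite /dvdz /g (big_morph absz (op1 := gcdn) (id1 := 0%N)) //.
  exact: (@biggcdn_inf _ j).
have g0 : 0 <= g.
  by rewrite /g; apply: (big_rec (fun x : int => 0 <= x)).
have gn0 : g != 0.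
  apply/negP => /eqP g0'; move: (gdiv k); rewrite g0' dvd0z => /eqP h.
  have : ((a0 k)%:~R : rat) = 0 by rewrite h.
  by rewrite Ha0 => /eqP; rewrite mulf_eq0 (negbTE ck) (negbTE Dn0).
have gn0' : (g%:~R : rat) != 0 by rewrite intr_eq0.
exists (fun j : 'I_m => divz (a0 j) g); exists (D%:~R / g%:~R : rat); split.
- by rewrite mulf_neq0 // invr_eq0.
- move=> j; have := divzK (gdiv j) => e.
  have : ((a0 j %/ g)%Z%:~R * g%:~R : rat) = c j * D%:~R by rewrite -intrM e Ha0.
  move=> e2; apply: (mulIf gn0'); rewrite e2; by field.
- have hm : {morph (fun x : int => x * g) : x y / gcdz x y >-> gcdz x y}.
    move=> x y /=; rewrite -mulz_gcdl; congr (_ * _); by rewrite gez0_abs.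
  have := big_morph (fun x : int => x * g) hm (mul0r g) (index_enum 'I_m) xpredT
            (fun j => (a0 j %/ g)%Z).
  rewrite /=.
  have e2 : \big[gcdz/0]_(i < m) ((a0 i %/ g)%Z * g) = g.
    by rewrite /g; apply: eq_bigr => i _; rewrite (divzK (gdiv i)).
  rewrite e2 => e; apply: (mulIf gn0); by rewrite e mul1r.
Qed.
Lemma circuit m n (v : 'I_m -> 'rV[rat]_n) (B : {set 'I_m}) i :
  freeS v B -> i \notin B -> ~ freeS v (i |: B) ->
  exists a : 'I_m -> int,
    [/\ elem_int_rel v a, a i != 0 & forall j, a j != 0 -> j \in i |: B].
Proof.
move=> hB hi hn; have [c [hs hsum [k ck]]] := notfree hn.
have ci : c i != 0.
  apply/negP => /eqP ci0; move/eqP: ck; apply; apply: (hB c) => // j hj.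
  case: (eqVneq j i) => [->|hji] //; apply: hs.
  by rewrite !inE negb_or hji.
have [a [l [l0 hal hg]]] := int_scale ci.
have aE : forall j, (a j != 0) = (c j != 0).
  by move=> j; rewrite -(intr_eq0 rat) hal mulf_eq0 negb_or l0.
exists a; split.
- split => //.
  + split; first by exists i; rewrite hal mulf_neq0.
    under eq_bigr do rewrite hal -scalerA.
    by rewrite -scaler_sumr hsum scaler0.
  + move=> c2 [[k2 ck2] hs2] hsub.
    have key : forall j, c j = 0 -> c2 j = 0.
      move=> j /eqP cj; apply/eqP; move: cj; apply: contraLR => hc2.
      have : j \in supp c2 by rewrite inE.
      by move/(subsetP hsub); rewrite inE aE.
    have c2i : c2 i != 0.
      apply/negP => /eqP c2i0; move/eqP: ck2; apply; apply: (hB c2) => // j hj.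
      case: (eqVneq j i) => [->|hji] //; apply: key; apply: hs.
      by rewrite !inE negb_or hji.
    pose mu := c2 i / c i.
    have mu0 : mu != 0 by rewrite mulf_neq0 // invr_eq0.
    have e : forall j, c2 j - mu * c j = 0.
      apply: (hB (fun j => c2 j - mu * c j)).
        move=> j hj; case: (eqVneq j i) => [->|hji].
          by rewrite /mu divfK // subrr.
        have cj : c j = 0 by apply: hs; rewrite !inE negb_or hji.
        by rewrite cj (key _ cj) mulr0 subrr.
      under eq_bigr do rewrite scalerBl -scalerA.
      by rewrite sumrB -scaler_sumr hsum hs2 scaler0 subrr.
    apply/setP => j; rewrite !inE aE.
    have -> : c2 j = mu * c j by apply/eqP; rewrite -subr_eq0 e.
    by rewrite mulf_eq0 negb_or mu0.
- by rewrite aE.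
- move=> j; rewrite aE => cj; apply/negPn/negP => hj.
  by move: cj; rewrite hs ?eqxx.
Qed.
Lemma maxfree m n (v : 'I_m -> 'rV[rat]_n) (F : {set 'I_m}) : freeS v F ->
  exists B : {set 'I_m}, [/\ F \subset B, freeS v B & forall i, i \notin B -> ~ freeS v (i |: B)].
Proof.
have : forall k (F : {set 'I_m}), (#|~: F| <= k)%N -> freeS v F ->
  exists B : {set 'I_m}, [/\ F \subset B, freeS v B & forall i, i \notin B -> ~ freeS v (i |: B)].
  elim => [|k IH] F0 hk hF.
    exists F0; split => // i hi _.
    have : (0 < #|~: F0|)%N by apply/card_gt0P; exists i; rewrite inE.
    by rewrite lt0n; move: hk; rewrite leqn0 => ->.
  case: (classic (exists i, i \notin F0 /\ freeS v (i |: F0))).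
    move=> [i [hi hiF]].
    have hp : ~: (i |: F0) \proper ~: F0.
      apply/properP; split; first by rewrite setCS subsetUr.
      by exists i; rewrite !inE ?eqxx //.
    have := proper_card hp => hlt.
    have [B [h1 h2 h3]] := IH (i |: F0) (leq_trans (leq_trans hlt hk) (leqnn _)) hiF.
    exists B; split => //; apply: subset_trans h1; exact: subsetUr.
  move=> hno; exists F0; split => // i hi hf; apply: hno; by exists i.
move=> h hF; exact: (h _ F (leqnn _) hF).
Qed.
Lemma vertexQP m n (v : 'I_m -> 'rV[rat]_n) (B F : {set 'I_m}) (x z : 'I_m -> rat) :
  freeS v B -> F \subset B -> (forall i, i \notin B -> ~ freeS v (i |: B)) ->
  (forall i, inQP v (z i)) -> (forall i, i \notin F -> inQP v (x i)) ->
  \sum_(i < m) x i *: v i = \sum_(i < m) z i *: v i -> forall j, inQP v (x j).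
Proof.
move=> hB hFB hmax hz hx hxz.
have hc : forall i, exists ci : 'I_m -> rat,
   [/\ v i = \sum_(j < m) ci j *: v j, forall j, inQP v (ci j),
       forall j, j \notin B -> ci j = 0 & i \in B -> forall j, ci j = (j == i)%:R].
  move=> i; case: (boolP (i \in B)) => hiB.
    exists (fun j => (j == i)%:R); split => //.
    - rewrite (bigD1 i) //= eqxx scale1r big1 ?addr0 // => j /negbTE ->.
      by rewrite scale0r.
    - by move=> j; case: (j == i); [exact: (QP_int v 1) | exact: QP0].
    - move=> j hj; have : j != i by apply: contraNneq hj => ->.
      by move=> /negbTE ->.
  have [a [ha ai hsupp]] := circuit hB hiB (hmax i hiB).
  have hs0 := ha; case: hs0 => [[_ hsum] _ _].
  have ai' : ((a i)%:~R : rat) != 0 by rewrite intr_eq0.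
  exists (fun j => if j == i then 0 else - (a j)%:~R / (a i)%:~R); split => //.
  - rewrite (bigD1 i) //= eqxx scale0r add0r.
    move: hsum; rewrite (bigD1 i) //= => /eqP; rewrite addrC addr_eq0 => /eqP hS.
    have -> : \sum_(j < m | j != i)
        (if j == i then 0 else - (a j)%:~R / (a i)%:~R) *: v j
      = (- ((a i)%:~R)^-1) *: \sum_(j < m | j != i) (a j)%:~R *: v j.
      rewrite scaler_sumr; apply: eq_bigr => j /negbTE ->.
      by rewrite scalerA mulrC mulNr mulrN.
    by rewrite hS scalerN scaleNr opprK scalerA mulVf // scale1r.
  - move=> j; case: (j == i); first exact: QP0.
    by have := QP_ratio (- a j) ha ai; rewrite rmorphN.
  - move=> j hj; case: (eqVneq j i) => // hji.
    have : a j == 0.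
      case: (eqVneq (a j) 0) => // /hsupp; rewrite !inE (negbTE hji) /= => hjB'.
      by rewrite hjB' in hj.
    by move/eqP ->; rewrite oppr0 mul0r.
pose C := fun i => proj1_sig (constructive_indefinite_description _ (hc i)).
have hC : forall i, [/\ v i = \sum_(j < m) C i j *: v j, forall j, inQP v (C i j),
       forall j, j \notin B -> C i j = 0 & i \in B -> forall j, C i j = (j == i)%:R].
  move=> i; exact: (proj2_sig (constructive_indefinite_description _ (hc i))).
have expand : forall u : 'I_m -> rat,
    \sum_(i < m) u i *: v i = \sum_(j < m) (\sum_(i < m) u i * C i j) *: v j.
  move=> u.
  have -> : \sum_(i < m) u i *: v i = \sum_(i < m) \sum_(j < m) (u i * C i j) *: v j.
    apply: eq_bigr => i _; case: (hC i) => hv _ _ _.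
    rewrite {1}hv scaler_sumr; apply: eq_bigr => j _; by rewrite scalerA.
  rewrite exchange_big; apply: eq_bigr => j _; by rewrite scaler_suml.
have d0 : forall j, \sum_(i < m) (x i - z i) * C i j = 0.
  apply: (hB (fun j => \sum_(i < m) (x i - z i) * C i j)).
    move=> j hj; apply: big1 => i _; case: (hC i) => _ _ h _.
    by rewrite h // mulr0.
  rewrite -expand.
  under eq_bigr do rewrite scalerBl.
  by rewrite sumrB hxz subrr.
move=> j; case: (boolP (j \in F)) => hjF; last by apply: hx.
have hjB : j \in B by apply: (subsetP hFB).
have := d0 j; rewrite (bigD1 j) //=.
case: (hC j) => _ _ _ /(_ hjB j); rewrite eqxx => ->; rewrite mulr1.
set S := \sum_(i < m | i != j) _ => e.
have -> : x j = z j - S by lra.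
apply: QPD => //; apply: QPN; apply: QP_sum => i hij.
case: (boolP (i \in B)) => hiB.
  by case: (hC i) => _ _ _ /(_ hiB j); rewrite eq_sym (negbTE hij) => ->; rewrite mulr0; exact: QP0.
have hiF : i \notin F by apply: contraNN hiB; apply: (subsetP hFB).
case: (hC i) => _ hq _ _.
by apply: QPM => //; apply: QPD; [exact: hx | exact: QPN].
Qed.
Lemma vertex m n (v : 'I_m -> 'rV[rat]_n) (a b : 'I_m -> rat) (w : 'rV[rat]_n) x :
  (forall i, a i <= x i <= b i) -> w = \sum_(i < m) x i *: v i ->
  exists x' : 'I_m -> rat, [/\ forall i, a i <= x' i <= b i,
    w = \sum_(i < m) x' i *: v i & freeS v [set i | a i < x' i < b i]].
Proof.
move=> hx hw.
have H : forall k (x : 'I_m -> rat), (#|[set i | (a i < x i < b i)%R]| <= k)%N ->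
  (forall i, a i <= x i <= b i) -> w = \sum_(i < m) x i *: v i ->
  exists x' : 'I_m -> rat, [/\ forall i, a i <= x' i <= b i,
    w = \sum_(i < m) x' i *: v i & freeS v [set i | a i < x' i < b i]].
  elim => [|kk IH] x0 hk hx0 hw0.
    exists x0; split => // c hs _ i; apply: hs.
    by move: hk; rewrite leqn0 cards_eq0 => /eqP ->; rewrite inE.
  case: (classic (freeS v [set i | a i < x0 i < b i])) => hf.
    by exists x0.
  have [c [hs hsum [k0 ck0]]] := notfree hf.
  pose r := fun i => if 0 < c i then (b i - x0 i) / c i else (a i - x0 i) / c i.
  have hr : forall i, c i != 0 -> r i * c i = (if 0 < c i then b i else a i) - x0 i.
    by move=> i ci; rewrite /r; case: ifP => _; rewrite divfK.
  have hF : forall i, c i != 0 -> a i < x0 i < b i.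
    move=> i ci; apply/negPn/negP => hi; move/eqP: ci; apply; apply: hs.
    by rewrite inE.
  case: (@extremumP _ _ (fun p q : rat => p <= q) k0 (fun i => c i != 0) r
         (@le_refl _ rat) (@le_trans _ rat) (@le_total _ rat) ck0) => k ck hmin.
  have rk0 : 0 < r k.
    have := hr k ck; have := hF k ck; case/andP => h1 h2.
    case: ifP => hc e.
      by rewrite ltNge; apply/negP => hle; have := mulr_le0_ge0 hle (ltW hc); rewrite e; lra.
    have hc' : c k < 0 by rewrite lt_neqAle ck /= leNgt hc.
    by rewrite ltNge; apply/negP => hle; have := mulr_le0 hle (ltW hc'); rewrite e; lra.
  pose x1 := fun i => x0 i + r k * c i.
  have hx1 : forall i, a i <= x1 i <= b i.
    move=> i; rewrite /x1; case/andP: (hx0 i) => h1 h2.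
    case: (eqVneq (c i) 0) => [->|ci]; first by rewrite mulr0 addr0 h1 h2.
    have := hmin i ci => hki; have := hr i ci.
    case: ifP => hc e.
      apply/andP; split; nra.
    have hc' : c i < 0 by rewrite lt_neqAle ci /= leNgt hc.
    apply/andP; split; nra.
  have hw1 : w = \sum_(i < m) x1 i *: v i.
    rewrite /x1; under eq_bigr do rewrite scalerDl -scalerA.
    by rewrite big_split /= -scaler_sumr hsum scaler0 addr0.
  apply: (IH x1) => //.
  have hsub : [set i | a i < x1 i < b i] \subset [set i | a i < x0 i < b i] :\ k.
    apply/subsetP => i; rewrite !inE => hi; apply/andP; split.
      apply/negP => /eqP eik; move: hi; rewrite eik /x1 -(addr0 (x0 k)) -addrA add0r.
      have := hr k ck; case: ifP => _ e; rewrite e addrC subrK ?ltxx //= andbF //.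
    case: (eqVneq (c i) 0) => [ci|ci]; last by apply: hF.
    by move: hi; rewrite /x1 ci mulr0 addr0.
  move: hk; rewrite (cardsD1 k) inE hF //= add1n ltnS => hk.
  exact: leq_trans (subset_leq_card hsub) hk.
exact: (H _ x (leqnn _) hx hw).
Qed.

Theorem mainTheorem6 (m n : nat) (v : 'I_m -> 'rV[rat]_n) (a b : 'I_m -> rat)
  (w : 'rV[rat]_n) :
  (forall i, inQP v (a i)) -> (forall i, inQP v (b i)) ->
  (forall i, a i <= b i) ->
  (exists z : 'I_m -> rat, (forall i, inQP v (z i)) /\ w = \sum_(i < m) z i *: v i) ->
  (exists x : 'I_m -> rat, (forall i, a i <= x i <= b i) /\ w = \sum_(i < m) x i *: v i) ->
  exists y : 'I_m -> rat,
    [/\ forall i, inQP v (y i), forall i, a i <= y i <= b i & w = \sum_(i < m) y i *: v i].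
Proof.
move=> ha hb hab [z [hz wz]] [x [hx wx]].
have [x' [hx' wx' hfree]] := vertex hx wx.
have [B [hFB hBf hmax]] := maxfree hfree.
exists x'; split => //.
apply: (vertexQP hBf hFB hmax hz); last by rewrite -wx' -wz.
move=> i; rewrite inE => hi; case/andP: (hx' i) => h1 h2.
move: h1; rewrite le_eqVlt => /orP [/eqP <-|h1] //.
move: hi; rewrite h1 /= lt_neqAle h2 andbT negbK => /eqP ->; exact: hb.
Qed.
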